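(* Let $\alpha > 0$ and let $\mathcal{X} \subset \mathbb{R}^2$ be a finite set with no $\alpha$-isolated points. Then the vertices of the $\alpha$-shape of $\mathcal{X}$ and the vertices of the $\alpha$-convex hull of $\mathcal{X}$ coincide.
   Context: A point $x\in\mathcal{X}$ is $\alpha$-isolated if there is no other point of $\mathcal{X}$ within distance $2\alpha$ of $x$. A pair of distinct points $x,x'\in\mathcal{X}$ forms an $\alpha$-edge if there is an open ball $B$ of radius $\alpha$ with $x,x'\in\partial B$ and $B\cap\mathcal{X}=\emptyset$; the $\alpha$-shape of $\mathcal{X}$ is the union of the segments $[xx']$ over all $\alpha$-edges, and its vertices are the points of $\mathcal{X}$ that are endpoints of some $\alpha$-edge. The $\alpha$-convex hull $H$ of $\mathcal{X}$ is the smallest $\alpha$-convex set containing $\mathcal{X}$ (a set $T$ is $\alpha$-convex if for every $x\notin\bar T$ there is an open ball of radius $\alpha$ containing $x$ and disjoint from $\bar T$); equivalently $H=\bigcap_{B}(\mathbb{R}^2\setminus B)$ over all open balls $B$ of radius $\alpha$ with $B\cap\mathcal{X}=\emptyset$. Its vertices are the points of $\mathcal{X}$ lying on $\partial H$. *)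

(* Defs.v *)
From Stdlib Require Import Reals List.
Open Scope R_scope.

Definition point := (R * R)%type.

Definition dist2 (p q : point) : R :=
  sqrt ((fst p - fst q) ^ 2 + (snd p - snd q) ^ 2).

Definition open_ball (c : point) (a : R) (z : point) : Prop := dist2 c z < a.

Definition alpha_isolated (a : R) (X : list point) (x : point) : Prop :=
  ~ (exists y, In y X /\ y <> x /\ dist2 x y <= 2 * a).

Definition empty_ball (a : R) (X : list point) (c : point) : Prop :=
  forall y, In y X -> ~ open_ball c a y.

Definition alpha_edge (a : R) (X : list point) (x x' : point) : Prop :=
  In x X /\ In x' X /\ x <> x' /\
  exists c, dist2 c x = a /\ dist2 c x' = a /\ empty_ball a X c.

Definition alpha_shape_vertex (a : R) (X : list point) (x : point) : Prop :=
  In x X /\ exists x', alpha_edge a X x x'.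

Definition alpha_hull (a : R) (X : list point) (z : point) : Prop :=
  forall c, empty_ball a X c -> ~ open_ball c a z.

Definition closure2 (S : point -> Prop) (z : point) : Prop :=
  forall eps, 0 < eps -> exists w, S w /\ dist2 z w < eps.

Definition boundary2 (S : point -> Prop) (z : point) : Prop :=
  closure2 S z /\ closure2 (fun w => ~ S w) z.

Definition alpha_hull_vertex (a : R) (X : list point) (x : point) : Prop :=
  In x X /\ boundary2 (alpha_hull a X) x.

(* Main.v *)
Require Import Defs.
From Stdlib Require Import Reals List.
From Stdlib Require Import Rgeom Lra Classical.
Open Scope R_scope.

Lemma d2_scale (u v p q : point) (k : R) :
  fst u - fst v = k * (fst p - fst q) -> snd u - snd v = k * (snd p - snd q) ->
  dist2 u v = Rabs k * dist2 p q.
Proof.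
  intros H1 H2. unfold dist2. rewrite H1, H2.
  replace ((k * (fst p - fst q)) ^ 2 + (k * (snd p - snd q)) ^ 2)
    with (Rsqr k * ((fst p - fst q) ^ 2 + (snd p - snd q) ^ 2)) by (unfold Rsqr; ring).
  rewrite sqrt_mult. rewrite sqrt_Rsqr_abs. reflexivity.
  all: try apply Rle_0_sqr. all: apply Rplus_le_le_0_compat; apply pow2_ge_0.
Qed.

Lemma d2_pos p q : 0 <= dist2 p q.
Proof. apply sqrt_pos. Qed.

Lemma d2_sym p q : dist2 p q = dist2 q p.
Proof. unfold dist2. f_equal. ring. Qed.

Lemma d2_refl p : dist2 p p = 0.
Proof. unfold dist2. replace ((fst p - fst p) ^ 2 + (snd p - snd p) ^ 2) with 0 by ring.
  apply sqrt_0. Qed.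

Lemma d2_zero p q : dist2 p q = 0 -> p = q.
Proof.
  unfold dist2. intro H. apply sqrt_eq_0 in H; [|apply Rplus_le_le_0_compat; apply pow2_ge_0].
  destruct p as [p1 p2], q as [q1 q2]; simpl in *.
  pose proof (pow2_ge_0 (p1-q1)). pose proof (pow2_ge_0 (p2-q2)).
  assert ((p1-q1)^2 = 0) by lra. assert ((p2-q2)^2 = 0) by lra.
  assert (p1 = q1) by (apply Rminus_diag_uniq; apply Rsqr_0_uniq; unfold Rsqr; lra).
  assert (p2 = q2) by (apply Rminus_diag_uniq; apply Rsqr_0_uniq; unfold Rsqr; lra). subst. reflexivity.
Qed.

Lemma d2_tri p q r : dist2 p q <= dist2 p r + dist2 r q.
Proof.
  assert (E : forall u v, dist2 u v = dist_euc (fst u) (snd u) (fst v) (snd v)).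
  { intros. unfold dist2, dist_euc, Rsqr. f_equal. ring. }
  rewrite !E. apply triangle.
Qed.

Lemma angle (u1 u2 : R) : u1 ^ 2 + u2 ^ 2 = 1 ->
  exists t, 0 <= t <= 2 * PI /\ cos t = u1 /\ sin t = u2.
Proof.
  intro H. assert (B : -1 <= u1 <= 1) by nra.
  assert (S : sqrt (1 - u1²) = Rabs u2).
  { rewrite <- sqrt_Rsqr_abs. f_equal. unfold Rsqr. nra. }
  pose proof (acos_bound u1). pose proof PI_RGT_0.
  destruct (Rle_dec 0 u2).
  - exists (acos u1). split; [lra|]. split. apply cos_acos; auto.
    rewrite sin_acos, S; auto. apply Rabs_pos_eq; auto.
  - exists (2 * PI - acos u1). split; [lra|].
    rewrite cos_minus, sin_minus, cos_2PI, sin_2PI, cos_acos, sin_acos, S by auto.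
    rewrite Rabs_left by lra. split; ring.
Qed.

Definition pt_eq (p q : point) : {p = q} + {p <> q}.
Proof. destruct p as [p1 p2], q as [q1 q2].
  destruct (Req_dec_T p1 q1), (Req_dec_T p2 q2); [left; congruence| right; congruence ..].
Defined.

Definition cth (x : point) (a t : R) : point := (fst x + a * cos t, snd x + a * sin t).

Fixpoint hl (a : R) (x : point) (L : list point) (c : point) : R :=
  match L with
  | nil => 3 * a
  | y :: L' => if pt_eq y x then hl a x L' c else Rmin (dist2 c y) (hl a x L' c)
  end.

Lemma cth_dist x a t : 0 <= a -> dist2 (cth x a t) x = a.
Proof.
  intro Ha. unfold dist2, cth; cbn [fst snd].
  replace ((fst x + a * cos t - fst x) ^ 2 + (snd x + a * sin t - snd x) ^ 2) with (a ^ 2).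
  apply sqrt_pow2; auto.
  pose proof (sin2_cos2 t). unfold Rsqr in *. nra.
Qed.

Lemma cth_hit x a p : 0 < dist2 p x ->
  exists t, 0 <= t <= 2 * PI /\ dist2 (cth x a t) p = Rabs (dist2 p x - a).
Proof.
  intro Hd. set (d := dist2 p x) in *.
  destruct (angle ((fst p - fst x) / d) ((snd p - snd x) / d)) as [t [Ht [Hc Hs]]].
  { assert (E : d ^ 2 = (fst p - fst x) ^ 2 + (snd p - snd x) ^ 2).
    { unfold d, dist2. rewrite pow2_sqrt; [reflexivity|].
      apply Rplus_le_le_0_compat; apply pow2_ge_0. }
    replace (((fst p - fst x) / d) ^ 2 + ((snd p - snd x) / d) ^ 2) with
      (((fst p - fst x) ^ 2 + (snd p - snd x) ^ 2) / d ^ 2) by (field; lra).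
    rewrite <- E. field. lra. }
  exists t. split; auto.
  rewrite (d2_scale _ _ p x (a / d - 1)).
  - fold d. rewrite <- (Rabs_pos_eq d) at 2 by lra. rewrite <- Rabs_mult.
    rewrite <- Rabs_Ropp. f_equal. field. lra.
  - unfold cth; cbn [fst snd]. rewrite Hc. field. lra.
  - unfold cth; cbn [fst snd]. rewrite Hs. field. lra.
Qed.

Section H.
Variables (a : R) (x : point).

Lemma hl_le L c y : In y L -> y <> x -> hl a x L c <= dist2 c y.
Proof.
  induction L as [|z L IH]; simpl; [tauto|]. intros [->|Hin] Hne.
  - destruct (pt_eq y x); [tauto|]. apply Rmin_l.
  - destruct (pt_eq z x); auto. eapply Rle_trans; [apply Rmin_r| auto].
Qed.

Lemma hl_lower L c m : m <= 3 * a ->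
  (forall y, In y L -> y <> x -> m <= dist2 c y) -> m <= hl a x L c.
Proof.
  intros Hm. induction L as [|z L IH]; simpl; intro H; auto.
  destruct (pt_eq z x). apply IH; auto.
  apply Rmin_glb; auto.
Qed.

Lemma hl_lower_strict L c m : m < 3 * a ->
  (forall y, In y L -> y <> x -> m < dist2 c y) -> m < hl a x L c.
Proof.
  intros Hm. induction L as [|z L IH]; simpl; intro H; auto.
  destruct (pt_eq z x). apply IH; auto.
  apply Rmin_glb_lt; auto.
Qed.

Lemma hl_attain L c : hl a x L c = 3 * a \/
  exists y, In y L /\ y <> x /\ hl a x L c = dist2 c y.
Proof.
  induction L as [|z L IH]; simpl; auto.
  destruct (pt_eq z x).
  - destruct IH as [IH|[y [H1 [H2 H3]]]]; auto. right; exists y; auto.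
  - destruct (Rle_dec (dist2 c z) (hl a x L c)).
    + rewrite Rmin_left by auto. right; exists z; auto.
    + rewrite Rmin_right by lra.
      destruct IH as [IH|[y [H1 [H2 H3]]]]; auto. right; exists y; auto.
Qed.

Lemma Rmin_form u v : Rmin u v = (u + v - Rabs (u - v)) / 2.
Proof.
  unfold Rmin. destruct (Rle_dec u v).
  - rewrite Rabs_left1 by lra. field.
  - rewrite Rabs_right by lra. field.
Qed.

Lemma cont_d y : continuity (fun t => dist2 (cth x a t) y).
Proof.
  intro t. unfold dist2, cth; cbn [fst snd].
  apply (continuity_pt_comp
    (fun t => (fst x + a * cos t - fst y) ^ 2 + (snd x + a * sin t - snd y) ^ 2) sqrt).
  - reg.
  - apply continuity_pt_sqrt. apply Rplus_le_le_0_compat; apply pow2_ge_0.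
Qed.

Lemma cont_hl L : continuity (fun t => hl a x L (cth x a t)).
Proof.
  induction L as [|z L IH]; simpl.
  - intro t. apply continuity_pt_const. intros u v; reflexivity.
  - destruct (pt_eq z x); auto.
    intro t.
    apply (continuity_pt_locally_ext
      (fun t => (dist2 (cth x a t) z + hl a x L (cth x a t)
                 - Rabs (dist2 (cth x a t) z - hl a x L (cth x a t))) / 2) _ 1).
    lra. intros; symmetry; apply Rmin_form.
    unfold Rdiv. apply continuity_pt_mult; [|apply continuity_pt_const; intros u v; reflexivity].
    apply continuity_pt_minus. apply continuity_pt_plus; [apply cont_d| apply IH].
    apply (continuity_pt_comp (fun t => dist2 (cth x a t) z - hl a x L (cth x a t)) Rabs).
    apply continuity_pt_minus; [apply cont_d| apply IH].
    apply Rcontinuity_abs.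
Qed.

End H.

Lemma empty_cth a x X t : 0 <= a -> a <= hl a x X (cth x a t) ->
  empty_ball a X (cth x a t).
Proof.
  intros Ha H y Hy. unfold open_ball. destruct (pt_eq y x) as [->|n].
  - rewrite cth_dist; lra.
  - pose proof (hl_le a x X (cth x a t) y Hy n). lra.
Qed.

Lemma lerp_dist (p c : point) (s : R) :
  let w := (fst p + s * (fst c - fst p), snd p + s * (snd c - snd p)) in
  dist2 p w = Rabs s * dist2 c p /\ dist2 c w = Rabs (1 - s) * dist2 c p.
Proof.
  intro w. split.
  - rewrite <- (Rabs_Ropp s). apply d2_scale; unfold w; cbn [fst snd]; ring.
  - apply d2_scale; unfold w; cbn [fst snd]; ring.
Qed.

Theorem proposition2 (a : R) (X : list point) :
  0 < a ->
  (forall x, In x X -> ~ alpha_isolated a X x) ->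
  forall x, alpha_shape_vertex a X x <-> alpha_hull_vertex a X x.
Proof.
  intros Ha Hiso x. split.
  - intros [Hx [x' [_ [_ [_ [c [Hcx [_ He]]]]]]]].
    split; auto. split.
    + intros eps Heps. exists x. split.
      * intros c' Hc' Hb. exact (Hc' x Hx Hb).
      * rewrite d2_refl; lra.
    + intros eps Heps. set (s := Rmin eps a / 2 / a).
      assert (Hm : 0 < Rmin eps a) by (apply Rmin_glb_lt; auto).
      assert (Hm2 : Rmin eps a <= a) by apply Rmin_r.
      assert (Hm3 : Rmin eps a <= eps) by apply Rmin_l.
      assert (Hs : 0 < s < 1).
      { unfold s; split. apply Rdiv_lt_0_compat; lra.
        apply (Rmult_lt_reg_r a); auto. field_simplify; lra. }
      destruct (lerp_dist x c s) as [H1 H2].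
      eexists. split; [|rewrite H1].
      * intro Hh. apply (Hh c He). unfold open_ball. rewrite H2, Hcx.
        rewrite Rabs_pos_eq by lra. nra.
      * rewrite Hcx, Rabs_pos_eq by lra. unfold s. field_simplify; lra.
  - intros [Hx [_ Hcl]].
    set (h := fun t => hl a x X (cth x a t)).
    assert (Hc : continuity h) by apply cont_hl.
    assert (H2P : 0 <= 2 * PI) by (pose proof PI_RGT_0; lra).
    destruct (continuity_ab_maj h 0 (2 * PI) H2P (fun c _ => Hc c)) as [ts [Hmax Hts]].
    assert (Hhs : a <= h ts).
    { destruct (Rle_dec a (h ts)) as [r|r]; auto. exfalso.
      set (eps := a - h ts).
      destruct (Hcl eps ltac:(unfold eps; lra)) as [w [Hw Hxw]].
      apply not_all_ex_not in Hw. destruct Hw as [cw Hw].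
      apply imply_to_and in Hw. destruct Hw as [Hcw Hbw]. apply NNPP in Hbw.
      unfold open_ball in Hbw.
      assert (Hd : a <= dist2 cw x).
      { destruct (Rle_dec a (dist2 cw x)); auto. exfalso. apply (Hcw x Hx).
        unfold open_ball; lra. }
      assert (Hd2 : dist2 cw x < a + eps).
      { pose proof (d2_tri cw x w). rewrite (d2_sym w x) in H. lra. }
      destruct (cth_hit x a cw ltac:(lra)) as [t0 [Ht0 Hd0]].
      rewrite Rabs_pos_eq in Hd0 by lra.
      assert (h ts < h t0).
      { unfold h. apply hl_lower_strict. fold (h ts); lra.
        intros y Hy _. pose proof (d2_tri cw y (cth x a t0)).
        rewrite (d2_sym cw (cth x a t0)) in H.
        assert (a <= dist2 cw y).
        { destruct (Rle_dec a (dist2 cw y)); auto. exfalso. apply (Hcw y Hy).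
          unfold open_ball; lra. }
        fold (h ts). unfold eps in *. lra. }
      specialize (Hmax t0 Ht0). lra. }
    pose proof (Hiso x Hx) as Hni. unfold alpha_isolated in Hni. apply NNPP in Hni.
    destruct Hni as [y0 [Hy0 [Hy0x Hxy0]]].
    assert (Hd0 : 0 < dist2 y0 x).
    { destruct (Rle_lt_or_eq_dec 0 (dist2 y0 x) (d2_pos _ _)); auto.
      exfalso. apply Hy0x. apply d2_zero. auto. }
    destruct (cth_hit x a y0 Hd0) as [t1 [_ Ht1]].
    rewrite d2_sym in Hxy0.
    assert (Ht1a : dist2 (cth x a t1) y0 <= a).
    { rewrite Ht1. apply Rabs_le. lra. }
    destruct (Rle_dec a (h t1)) as [r|r].
    + split; auto. exists y0. split; auto. split; auto. split; [congruence|].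
      exists (cth x a t1). split; [apply cth_dist; lra|]. split.
      * pose proof (hl_le a x X (cth x a t1) y0 Hy0 Hy0x). fold (h t1) in H. lra.
      * apply empty_cth; [lra| exact r].
    + set (g := fun t => h t - a).
      assert (Hg : continuity g) by (apply continuity_minus; auto; apply continuity_const; intros u v; reflexivity).
      assert (Hz : exists z, h z = a).
      { destruct (Rle_dec ts t1).
        - destruct (IVT_cor g ts t1 Hg r0) as [z [_ Hz]].
          { unfold g. assert (0 <= h ts - a) by lra. assert (h t1 - a <= 0) by lra. nra. }
          exists z. unfold g in Hz. lra.
        - destruct (IVT_cor g t1 ts Hg ltac:(lra)) as [z [_ Hz]].
          { unfold g. assert (0 <= h ts - a) by lra. assert (h t1 - a <= 0) by lra. nra. }
          exists z. unfold g in Hz. lra. }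
      destruct Hz as [z Hz].
      destruct (hl_attain a x X (cth x a z)) as [E|[y [Hy [Hyx Hyd]]]].
      { fold (h z) in E. lra. }
      fold (h z) in Hyd.
      split; auto. exists y. split; auto. split; auto. split; [congruence|].
      exists (cth x a z). split; [apply cth_dist; lra|]. split; [lra|].
      apply empty_cth; [lra|]. fold (h z). lra.
Qed.
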